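(* Consider a ground terminal at $(p,q,h_0)$ and a UAV at $(x,y,z)$ with the altitude $z>h_0$ fixed, and let $d(x,y)=\sqrt{(x-p)^2+(y-q)^2+(z-h_0)^2}$. Let $a,b>0$, $0<\eta_{LoS}<\eta_{NLoS}$, $L>0$ and $G>0$ be constants, and define on $\mathbb{R}^2$ \[ \theta(x,y)=\tfrac{180}{\pi}\arcsin\!\Big(\tfrac{z-h_0}{d(x,y)}\Big),\quad PR(x,y)=\frac{1}{1+a\exp(-b(\theta(x,y)-a))}, \] \[ h(x,y)=\frac{G}{d(x,y)^2L\big(PR(x,y)\,\eta_{LoS}+(1-PR(x,y))\,\eta_{NLoS}\big)}. \] Fix a reference point $(x^0,y^0)\neq(p,q)$ and set $C=d(x^0,y^0)/(z-h_0)>1$. Define \[ \bar\theta(x,y)=\tfrac{180}{\pi}\Big(\arcsin(1/C)-\tfrac{1}{C\sqrt{C^2-1}}\big(\tfrac{d(x,y)}{z-h_0}-C\big)\Big),\qquad D=1+a\exp\big(-b(\bar\theta(x^0,y^0)-a)\big), \] \[ \overline{PR}(x,y)=\frac{2}{D}-\frac{1}{D^2}-\frac{a}{D^2}\exp\big(-b(\bar\theta(x,y)-a)\big),\qquad \Lambda(x,y)=d(x,y)^2L\big(\overline{PR}(x,y)\,\eta_{LoS}+(1-\overline{PR}(x,y))\,\eta_{NLoS}\big), \] and, with $\Lambda_0=\Lambda(x^0,y^0)$, \[ H(x,y)=G\Big(\frac{2}{\Lambda_0}-\frac{\Lambda(x,y)}{\Lambda_0^2}\Big). \] Then $H(x,y)\le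 h(x,y)$ for all $(x,y)\in\mathbb{R}^2$, and $H$ is concave on $\mathbb{R}^2$. In particular this holds for the UAV–BS channel gain $h_{U,B}^k$ (terminal at $(0,0,H_B)$, $G=|g_{U,B}^k|^2$, $L=L^k$) with its approximation $H_{U,B}^k$, and for the UAV–UE-$n$ channel gain $h_{n,U}^k$ (terminal at $(x_n,y_n,0)$, $G=|g_{U,n}^k|^2$, $L=L^k$) with its approximation $H_{n,U}^k$.
   Context: This is the air-to-ground channel model: $\theta$ is the elevation angle in degrees, $PR$ the line-of-sight probability with environment constants $a,b$, $\eta_{LoS},\eta_{NLoS}$ are the (linear-scale) additional attenuation factors of LoS/NLoS links, $L^k=(4\pi f^k/c)^2$ is the free-space pathloss factor of subchannel $k$, and $|g|^2>0$ is the (fixed) small-scale fading power. The BS is at $(0,0,H_B)$, UE $n$ at $(x_n,y_n,0)$, and the UAV altitude is above the terminal. The reference point $(x^0,y^0)$ is the horizontal UAV position from the previous iteration of a successive convex programming procedure. *)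

(* Defs.v *)
From Stdlib Require Import Reals.
Open Scope R_scope.

Definition dist3 (p q h0 z x y : R) : R :=
  sqrt ((x - p)^2 + (y - q)^2 + (z - h0)^2).

Definition theta (p q h0 z x y : R) : R :=
  180 / PI * asin ((z - h0) / dist3 p q h0 z x y).

Definition PR (a b p q h0 z x y : R) : R :=
  1 / (1 + a * exp (- b * (theta p q h0 z x y - a))).

Definition gain (a b etaL etaN L G p q h0 z x y : R) : R :=
  G / ((dist3 p q h0 z x y)^2 * L *
       (PR a b p q h0 z x y * etaL + (1 - PR a b p q h0 z x y) * etaN)).

Definition Cst (p q h0 z x0 y0 : R) : R := dist3 p q h0 z x0 y0 / (z - h0).

Definition theta_bar (p q h0 z x0 y0 x y : R) : R :=
  let C := Cst p q h0 z x0 y0 in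
  180 / PI * (asin (1 / C)
              - 1 / (C * sqrt (C^2 - 1)) * (dist3 p q h0 z x y / (z - h0) - C)).

Definition Dst (a b p q h0 z x0 y0 : R) : R :=
  1 + a * exp (- b * (theta_bar p q h0 z x0 y0 x0 y0 - a)).

Definition PR_bar (a b p q h0 z x0 y0 x y : R) : R :=
  let D := Dst a b p q h0 z x0 y0 in
  2 / D - 1 / D^2 - a / D^2 * exp (- b * (theta_bar p q h0 z x0 y0 x y - a)).

Definition Lambda (a b etaL etaN L p q h0 z x0 y0 x y : R) : R :=
  (dist3 p q h0 z x y)^2 * L *
  (PR_bar a b p q h0 z x0 y0 x y * etaL
   + (1 - PR_bar a b p q h0 z x0 y0 x y) * etaN).

Definition Hsur (a b etaL etaN L G p q h0 z x0 y0 x y : R) : R :=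
  let L0 := Lambda a b etaL etaN L p q h0 z x0 y0 x0 y0 in
  G * (2 / L0 - Lambda a b etaL etaN L p q h0 z x0 y0 x y / L0^2).

Definition concave2 (f : R -> R -> R) : Prop :=
  forall x1 y1 x2 y2 t, 0 <= t <= 1 ->
    t * f x1 y1 + (1 - t) * f x2 y2
      <= f (t * x1 + (1 - t) * x2) (t * y1 + (1 - t) * y2).

(* Main.v *)
Require Import Defs.
From Stdlib Require Import Reals Lra Psatz.
Open Scope R_scope.

Lemma xcos_le_sin (d : R) : 0 <= d <= PI -> d * cos d <= sin d.
Proof.
  intros [H0 H1].
  destruct (Req_dec d 0) as [->|Hn].
  { rewrite sin_0; lra. }
  assert (Hd : 0 < d) by lra.
  destruct (MVT_cor2 (fun x => sin x - x * cos x) (fun x => x * sin x) 0 d Hd)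
    as [c [Hc1 Hc2]].
  { intros c _.
    change (fun x => sin x - x * cos x) with (minus_fct sin (mult_fct id cos)).
    replace (c * sin c) with (cos c - (1 * cos c + id c * (- sin c))) by (unfold id; ring).
    apply derivable_pt_lim_minus.
    - apply derivable_pt_lim_sin.
    - apply derivable_pt_lim_mult.
      + apply derivable_pt_lim_id.
      + apply derivable_pt_lim_cos. }
  rewrite sin_0, cos_0 in Hc1.
  assert (0 <= sin c) by (apply sin_ge_0; lra).
  assert (0 <= c * sin c * (d - 0)) by (apply Rmult_le_pos; [apply Rmult_le_pos|]; lra).
  lra.
Qed.

Lemma angle_ineq (f f0 : R) : 0 < f <= PI/2 -> 0 < f0 < PI/2 ->
  sin f0 * (sin f - sin f0) / (cos f0 * sin f) <= f - f0.
Proof.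
  intros Hf Hf0.
  pose proof PI_RGT_0 as HPI.
  assert (Hs : 0 < sin f) by (apply sin_gt_0; lra).
  assert (Hc0 : 0 < cos f0) by (apply cos_gt_0; lra).
  assert (Hs0 : 0 < sin f0) by (apply sin_gt_0; lra).
  assert (Hc : 0 <= cos f) by (apply cos_ge_0; lra).
  assert (Hp : 0 < cos f0 * sin f) by (apply Rmult_lt_0_compat; lra).
  apply Rmult_le_reg_r with (cos f0 * sin f); [exact Hp|].
  unfold Rdiv; rewrite Rmult_assoc, Rinv_l by lra; rewrite Rmult_1_r.
  destruct (Rle_or_lt f0 f) as [Hle|Hlt].
  - set (d := f - f0).
    assert (Ef : f = f0 + d) by (unfold d; ring).
    assert (Hsd : sin d <= d).
    { destruct (Req_dec d 0) as [E|E]. rewrite E, sin_0; lra.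
      left; apply sin_lt_x; unfold d in *; lra. }
    assert (Hsd0 : 0 <= sin d) by (apply sin_ge_0; unfold d; lra).
    assert (Hcd : cos d <= 1) by (apply COS_bound).
    assert (Hmon : sin f0 <= sin f) by (apply sin_incr_1; lra).
    assert (Hsf : sin f = sin f0 * cos d + cos f0 * sin d) by (rewrite Ef, sin_plus; ring).
    assert (Key : cos f0 * sin f * sin d - sin f0 * (sin f - sin f0)
                  = cos f0 * sin d * (sin f - sin f0) + sin f0 ^ 2 * (1 - cos d))
      by (rewrite Hsf; ring).
    assert (0 <= cos f0 * sin d * (sin f - sin f0)).
    { apply Rmult_le_pos; [apply Rmult_le_pos|]; lra. }
    assert (0 <= sin f0 ^ 2 * (1 - cos d)) by (apply Rmult_le_pos; [apply pow2_ge_0|lra]).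
    assert (cos f0 * sin f * sin d <= cos f0 * sin f * d) by (apply Rmult_le_compat_l; lra).
    nra.
  - set (d := f0 - f).
    assert (Ef : f0 = f + d) by (unfold d; ring).
    assert (Hd : 0 < d < PI/2) by (unfold d; lra).
    assert (HQ : 0 < cos d) by (apply cos_gt_0; lra).
    assert (HQ1 : cos d <= 1) by apply COS_bound.
    assert (HS : sin d ^ 2 <= 1) by (pose proof (SIN_bound d); nra).
    assert (Hdc : d * cos d <= sin d) by (apply xcos_le_sin; lra).
    assert (Hsf0 : sin f0 = sin f * cos d + cos f * sin d) by (rewrite Ef, sin_plus; ring).
    assert (Hcf0 : cos f0 = cos f * cos d - sin f * sin d) by (rewrite Ef, cos_plus; ring).
    assert (Hpy : sin d ^ 2 + cos d ^ 2 = 1) by (pose proof (sin2_cos2 d); unfold Rsqr in *; nra).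
    set (s := sin f) in *. set (c := cos f) in *. set (S := sin d) in *. set (Q := cos d) in *.
    assert (Id : sin f0 * (sin f0 - s) * Q - S * cos f0 * s
       = (1 - Q) * ((s - c*S*Q)^2 + s^2*(Q - Q^2) + c^2*(Q*(1+Q) - S^2*Q^2))
         + (S^2 + Q^2 - 1) * (s^2 + c^2 * Q)) by (rewrite Hsf0, Hcf0; ring).
    rewrite Hpy in Id.
    assert (0 <= (1 - Q) * ((s - c*S*Q)^2 + s^2*(Q - Q^2) + c^2*(Q*(1+Q) - S^2*Q^2))).
    { apply Rmult_le_pos; [lra|].
      assert (0 <= (s - c*S*Q)^2) by apply pow2_ge_0.
      assert (0 <= s^2*(Q - Q^2)) by (apply Rmult_le_pos; [apply pow2_ge_0|nra]).
      assert (0 <= c^2*(Q*(1+Q) - S^2*Q^2)) by (apply Rmult_le_pos; [apply pow2_ge_0|nra]).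
      lra. }
    assert (Hcs : 0 < cos f0 * s) by exact Hp.
    assert (H1 : d * Q * (cos f0 * s) <= S * (cos f0 * s)) by (apply Rmult_le_compat_r; lra).
    assert (H2 : Q * (d * (cos f0 * s)) <= Q * (sin f0 * (sin f0 - s))) by nra.
    assert (H3 : d * (cos f0 * s) <= sin f0 * (sin f0 - s)) by (apply Rmult_le_reg_l with Q; lra).
    replace (f - f0) with (- d) by (unfold d; ring). nra.
Qed.
Lemma asin_tangent (C u : R) : 1 < C -> 1 <= u ->
  asin (1/C) - 1/(C*sqrt(C^2-1))*(u - C) <= asin (1/u).
Proof.
  intros HC Hu.
  pose proof PI_RGT_0 as HPI.
  assert (b0 : -1 <= 1/C <= 1).
  { split; [|apply (Rmult_le_reg_l C); [lra|]; field_simplify; lra].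
    assert (0 < 1/C) by (apply Rdiv_lt_0_compat; lra). lra. }
  assert (b1 : -1 <= 1/u <= 1).
  { split; [|apply (Rmult_le_reg_l u); [lra|]; field_simplify; lra].
    assert (0 < 1/u) by (apply Rdiv_lt_0_compat; lra). lra. }
  assert (pC : 0 < 1/C) by (apply Rdiv_lt_0_compat; lra).
  assert (pu : 0 < 1/u) by (apply Rdiv_lt_0_compat; lra).
  assert (lC : 1/C < 1) by (apply (Rmult_lt_reg_l C); [lra|]; field_simplify; lra).
  set (f := asin (1/u)). set (f0 := asin (1/C)).
  assert (sf : sin f = 1/u) by (apply sin_asin; exact b1).
  assert (sf0 : sin f0 = 1/C) by (apply sin_asin; exact b0).
  assert (cf0 : cos f0 = sqrt (1 - (1/C)²)) by (apply cos_asin; exact b0).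
  pose proof (asin_bound (1/u)) as Bf. pose proof (asin_bound (1/C)) as Bf0.
  fold f in Bf. fold f0 in Bf0.
  assert (fpos : 0 < f).
  { destruct (Rle_or_lt f 0) as [H|H]; [|exact H].
    assert (sin f <= sin 0) by (apply sin_incr_1; lra). rewrite sin_0 in *. lra. }
  assert (f0pos : 0 < f0).
  { destruct (Rle_or_lt f0 0) as [H|H]; [|exact H].
    assert (sin f0 <= sin 0) by (apply sin_incr_1; lra). rewrite sin_0 in *. lra. }
  assert (f0lt : f0 < PI/2).
  { destruct (Rle_or_lt (PI/2) f0) as [H|H]; [|exact H].
    assert (f0 = PI/2) by lra. rewrite H0, sin_PI2 in sf0. lra. }
  pose proof (angle_ineq f f0 (conj fpos (proj2 Bf)) (conj f0pos f0lt)) as K.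
  set (r := sqrt (1 - (1/C)²)) in *.
  assert (rpos : 0 < r).
  { unfold r; apply sqrt_lt_R0. unfold Rsqr. nra. }
  assert (Er : sqrt (C^2 - 1) = C * r).
  { unfold r. replace (C^2 - 1) with (C^2 * (1 - (1/C)²)) by (unfold Rsqr; field; lra).
    rewrite sqrt_mult_alt by (apply pow2_ge_0).
    rewrite sqrt_pow2 by lra. reflexivity. }
  rewrite Er. rewrite sf, sf0, cf0 in K. fold r in K.
  replace (1 / (C * (C * r)) * (u - C)) with (- (1 / C * (1 / u - 1 / C) / (r * (1 / u))))
    by (field; repeat split; lra).
  lra.
Qed.

Lemma cs3 (a1 a2 a3 b1 b2 b3 : R) :
  a1*b1 + a2*b2 + a3*b3 <= sqrt (a1^2+a2^2+a3^2) * sqrt (b1^2+b2^2+b3^2).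
Proof.
  set (su := sqrt (a1^2+a2^2+a3^2)). set (sv := sqrt (b1^2+b2^2+b3^2)).
  assert (Hu : su^2 = a1^2+a2^2+a3^2) by (unfold su; rewrite pow2_sqrt; [ring|nra]).
  assert (Hv : sv^2 = b1^2+b2^2+b3^2) by (unfold sv; rewrite pow2_sqrt; [ring|nra]).
  assert (0 <= su) by apply sqrt_pos. assert (0 <= sv) by apply sqrt_pos.
  assert (L : (a1*b1 + a2*b2 + a3*b3)^2 <= (su*sv)^2).
  { replace ((su*sv)^2) with (su^2*sv^2) by ring. rewrite Hu, Hv.
    assert (0 <= (a1*b2-a2*b1)^2 + (a1*b3-a3*b1)^2 + (a2*b3-a3*b2)^2) by
      (repeat apply Rplus_le_le_0_compat; apply pow2_ge_0).
    nra. }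
  assert (0 <= su*sv) by (apply Rmult_le_pos; lra).
  nra.
Qed.

Lemma norm_convex (a1 a2 a3 b1 b2 b3 t : R) : 0 <= t <= 1 ->
  sqrt ((t*a1+(1-t)*b1)^2 + (t*a2+(1-t)*b2)^2 + (t*a3+(1-t)*b3)^2)
  <= t * sqrt (a1^2+a2^2+a3^2) + (1-t) * sqrt (b1^2+b2^2+b3^2).
Proof.
  intros Ht.
  set (su := sqrt (a1^2+a2^2+a3^2)). set (sv := sqrt (b1^2+b2^2+b3^2)).
  assert (Hu : su^2 = a1^2+a2^2+a3^2) by (unfold su; rewrite pow2_sqrt; [ring|nra]).
  assert (Hv : sv^2 = b1^2+b2^2+b3^2) by (unfold sv; rewrite pow2_sqrt; [ring|nra]).
  assert (0 <= su) by apply sqrt_pos. assert (0 <= sv) by apply sqrt_pos.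
  pose proof (cs3 a1 a2 a3 b1 b2 b3) as CS. fold su sv in CS.
  assert (0 <= t * su + (1-t)*sv) by nra.
  rewrite <- (sqrt_pow2 (t * su + (1-t)*sv)) by assumption.
  apply sqrt_le_1_alt.
  assert (0 <= t*(1-t)) by nra.
  replace ((t * su + (1 - t) * sv) ^ 2) with
    (t^2 * su^2 + 2*(t*(1-t))*(su*sv) + (1-t)^2*sv^2) by ring.
  rewrite Hu, Hv.
  assert (t*(1-t)*(a1*b1+a2*b2+a3*b3) <= t*(1-t)*(su*sv)) by (apply Rmult_le_compat_l; lra).
  nra.
Qed.

Definition phi (K M al be s : R) := s^2 * (K + M * exp (al + be * s)).

Lemma phi_mono K M al be s s' : 0 <= K -> 0 <= M -> 0 <= be -> 0 <= s <= s' ->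
  phi K M al be s <= phi K M al be s'.
Proof.
  intros HK HM Hb Hs. unfold phi.
  assert (exp (al + be*s) <= exp (al + be*s')).
  { destruct (Req_dec (al+be*s) (al+be*s')) as [E|E]. rewrite E; lra.
    left; apply exp_increasing. nra. }
  pose proof (exp_pos (al+be*s)).
  apply Rmult_le_compat; try nra.
Qed.

Lemma exp_ge1 x : 1 + x <= exp x.
Proof.
  destruct (Req_dec x 0) as [->|H]. rewrite exp_0; lra.
  left; apply exp_ineq1; exact H.
Qed.

Lemma phi_tangent K M al be x y : 0 <= K -> 0 <= M -> 0 <= be -> 0 <= x -> 0 <= y ->
  phi K M al be x + (2*K*x + M*exp(al+be*x)*(2*x+be*x^2))*(y-x) <= phi K M al be y.
Proof.
  intros HK HM Hb Hx Hy. unfold phi.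
  set (e := exp (al+be*x)).
  assert (Ee : exp (al + be*y) = e * exp (be*(y-x))).
  { unfold e; rewrite <- exp_plus; f_equal; ring. }
  rewrite Ee.
  pose proof (exp_ge1 (be*(y-x))) as G1.
  assert (He : 0 < e) by apply exp_pos.
  set (E := exp (be*(y-x))) in *.
  assert (A1 : y^2 * (1+be*(y-x)) <= y^2 * E) by (apply Rmult_le_compat_l; [nra|lra]).
  assert (A2 : 0 <= (y-x)^2*(1+be*(x+y))) by (apply Rmult_le_pos; [apply pow2_ge_0|]; assert (0 <= be*(x+y)) by (apply Rmult_le_pos; lra); lra).
  assert (Id : y^2 * (1+be*(y-x)) - (x^2 + (2*x+be*x^2)*(y-x)) = (y-x)^2*(1+be*(x+y))) by ring.
  assert (A3 : x^2 + (2*x+be*x^2)*(y-x) <= y^2*E) by lra.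
  assert (A4 : M*e*(x^2 + (2*x+be*x^2)*(y-x)) <= M*e*(y^2*E))
    by (apply Rmult_le_compat_l; [nra|lra]).
  assert (A5 : K*(x^2 + 2*x*(y-x)) <= K*y^2) by (apply Rmult_le_compat_l; [lra|]; pose proof (pow2_ge_0 (y-x)); nra).
  unfold E in *. lra.
Qed.

Lemma phi_convex K M al be s s1 s2 t : 0 <= K -> 0 <= M -> 0 <= be ->
  0 <= s1 -> 0 <= s2 -> 0 <= t <= 1 -> 0 <= s <= t*s1 + (1-t)*s2 ->
  phi K M al be s <= t * phi K M al be s1 + (1-t) * phi K M al be s2.
Proof.
  intros HK HM Hb H1 H2 Ht Hs.
  set (m := t*s1 + (1-t)*s2).
  assert (0 <= m) by (unfold m; nra).
  pose proof (phi_mono K M al be s m HK HM Hb (conj (proj1 Hs) (proj2 Hs))).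
  pose proof (phi_tangent K M al be m s1 HK HM Hb H H1) as T1.
  pose proof (phi_tangent K M al be m s2 HK HM Hb H H2) as T2.
  set (g := 2*K*m + M*exp(al+be*m)*(2*m+be*m^2)) in *.
  apply Rmult_le_compat_l with (r := t) in T1; [|lra].
  apply Rmult_le_compat_l with (r := 1-t) in T2; [|lra].
  assert (Z : t*(g*(s1-m)) + (1-t)*(g*(s2-m)) = 0) by (unfold m; ring).
  nra.
Qed.

Lemma pow2_gt_0 x : x <> 0 -> 0 < x ^ 2.
Proof. intros H. replace (x^2) with (x*x) by ring. destruct (Rlt_or_le x 0); [nra|].
  destruct H0; [nra|]. exfalso; apply H; lra. Qed.

Lemma div_nonneg a b : 0 <= a -> 0 < b -> 0 <= a / b.
Proof. intros. unfold Rdiv. apply Rmult_le_pos; [lra|]. left; apply Rinv_0_lt_compat; lra. Qed.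

Lemma exp_le x y : x <= y -> exp x <= exp y.
Proof. intros [H|H]. left; apply exp_increasing; exact H. rewrite H; lra. Qed.

Lemma tang_inv (Lm L0 : R) : 0 < Lm -> 2/L0 - Lm/L0^2 <= 1/Lm.
Proof.
  intros H. destruct (Req_dec L0 0) as [->|Hn].
  - replace (0^2) with 0 by ring. unfold Rdiv; rewrite Rinv_0.
    assert (0 < 1 * / Lm) by (rewrite Rmult_1_l; apply Rinv_0_lt_compat; lra). lra.
  - assert (E : 1/Lm - (2/L0 - Lm/L0^2) = (Lm - L0)^2 / (Lm * L0^2)) by (field; lra).
    assert (0 <= (Lm - L0)^2 / (Lm * L0^2)).
    { apply div_nonneg. apply pow2_ge_0.
      apply Rmult_lt_0_compat; [lra|]. apply pow2_gt_0; intro; lra. }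
    lra.
Qed.

Lemma dist_ge p q h0 z x y : h0 < z -> z - h0 <= dist3 p q h0 z x y.
Proof.
  intros H. unfold dist3.
  rewrite <- (sqrt_pow2 (z - h0)) at 1 by lra.
  apply sqrt_le_1_alt. pose proof (pow2_ge_0 (x-p)); pose proof (pow2_ge_0 (y-q)). lra.
Qed.

Lemma dist_gt p q h0 z x0 y0 : h0 < z -> (x0, y0) <> (p, q) -> z - h0 < dist3 p q h0 z x0 y0.
Proof.
  intros H Hn. unfold dist3.
  rewrite <- (sqrt_pow2 (z - h0)) at 1 by lra.
  apply sqrt_lt_1_alt. split; [apply pow2_ge_0|].
  destruct (Req_dec x0 p) as [->|Hx].
  - destruct (Req_dec y0 q) as [->|Hy]. exfalso; apply Hn; reflexivity.
    assert (0 < (y0-q)^2) by (apply pow2_gt_0; intro; apply Hy; lra). pose proof (pow2_ge_0 (p-p)). lra.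
  - assert (0 < (x0-p)^2) by (apply pow2_gt_0; intro; apply Hx; lra). pose proof (pow2_ge_0 (y0-q)). lra.
Qed.

Lemma Cst_gt1 p q h0 z x0 y0 : h0 < z -> (x0, y0) <> (p, q) -> 1 < Cst p q h0 z x0 y0.
Proof.
  intros H Hn. unfold Cst. pose proof (dist_gt p q h0 z x0 y0 H Hn).
  apply (Rmult_lt_reg_r (z-h0)); [lra|]. field_simplify; lra.
Qed.

Lemma theta_le p q h0 z x0 y0 x y : h0 < z -> (x0, y0) <> (p, q) ->
  theta_bar p q h0 z x0 y0 x y <= theta p q h0 z x y.
Proof.
  intros H Hn. unfold theta_bar, theta. cbv zeta.
  pose proof (Cst_gt1 p q h0 z x0 y0 H Hn) as HC.
  pose proof (dist_ge p q h0 z x y H) as Hd.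
  set (C := Cst p q h0 z x0 y0) in *. set (d := dist3 p q h0 z x y) in *.
  assert (Hu : 1 <= d / (z - h0)).
  { apply (Rmult_le_reg_r (z-h0)); [lra|]. field_simplify; lra. }
  pose proof (asin_tangent C (d/(z-h0)) HC Hu) as T.
  replace (1 / (d / (z - h0))) with ((z-h0)/d) in T by (field; lra).
  apply Rmult_le_compat_l; [|exact T].
  pose proof PI_RGT_0. left; apply Rdiv_lt_0_compat; lra.
Qed.

Lemma Dst_gt1 a b p q h0 z x0 y0 : 0 < a -> 1 < Dst a b p q h0 z x0 y0.
Proof. intros Ha. unfold Dst. pose proof (exp_pos (- b * (theta_bar p q h0 z x0 y0 x0 y0 - a))). nra. Qed.

Lemma Lambda_eq a b etaL etaN L p q h0 z x0 y0 x y : h0 < z -> (x0, y0) <> (p, q) ->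
  let D := Dst a b p q h0 z x0 y0 in
  let C := Cst p q h0 z x0 y0 in
  let k := 1 / (C * sqrt (C^2 - 1)) in
  Lambda a b etaL etaN L p q h0 z x0 y0 x y =
  L * phi (etaN - (2/D - 1/D^2)*(etaN-etaL)) (a/D^2*(etaN-etaL))
          (- b * (180 / PI * (asin (1/C) + k * C) - a)) (b * (180/PI) * k / (z - h0))
          (dist3 p q h0 z x y).
Proof.
  intros H Hn D C k.
  unfold Lambda, PR_bar, phi. fold D.
  assert (E : exp (- b * (theta_bar p q h0 z x0 y0 x y - a)) =
              exp (- b * (180 / PI * (asin (1/C) + k * C) - a) +
                   b * (180/PI) * k / (z - h0) * dist3 p q h0 z x y)).
  { f_equal. unfold theta_bar. cbv zeta. fold C. fold k.
    pose proof PI_RGT_0. field. lra. }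
  rewrite E. ring.
Qed.

Theorem theorem1 (p q h0 z a b etaL etaN L G x0 y0 : R) :
  h0 < z -> 0 < a -> 0 < b -> 0 < etaL -> etaL < etaN -> 0 < L -> 0 < G ->
  (x0, y0) <> (p, q) ->
  (forall x y,
     Hsur a b etaL etaN L G p q h0 z x0 y0 x y
       <= gain a b etaL etaN L G p q h0 z x y) /\
  concave2 (Hsur a b etaL etaN L G p q h0 z x0 y0).
Proof.
  intros Hz Ha Hb HL HLN HLp HG Hn.
  pose proof (Dst_gt1 a b p q h0 z x0 y0 Ha) as HD.
  split.
  - intros x y.
    pose proof (theta_le p q h0 z x0 y0 x y Hz Hn) as Hth.
    pose proof (dist_ge p q h0 z x y Hz) as Hd.
    unfold Hsur, gain. cbv zeta.
    set (L0 := Lambda a b etaL etaN L p q h0 z x0 y0 x0 y0).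
    unfold Lambda, PR_bar, PR.
    set (D := Dst a b p q h0 z x0 y0) in *.
    set (d := dist3 p q h0 z x y) in *.
    set (e1 := exp (- b * (theta p q h0 z x y - a))).
    set (e2 := exp (- b * (theta_bar p q h0 z x0 y0 x y - a))).
    assert (He : e1 <= e2) by (apply exp_le; nra).
    assert (He1 : 0 < e1) by apply exp_pos.
    set (X := 1 + a * e1).
    assert (HX : 1 < X) by (unfold X; nra).
    set (PRv := 1 / X). set (PRb := 2 / D - 1 / D ^ 2 - a / D ^ 2 * e2).
    assert (P1 : 0 < PRv < 1).
    { unfold PRv; split. apply Rdiv_lt_0_compat; lra.
      apply (Rmult_lt_reg_r X); [lra|]. field_simplify; lra. }
    assert (P2 : PRb <= PRv).
    { assert (S1 : PRb <= 2/D - 1/D^2 - a/D^2*e1).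
      { unfold PRb. assert (a / D^2 * e1 <= a / D^2 * e2).
        { apply Rmult_le_compat_l; [|lra]. apply div_nonneg; [lra|].
          apply pow2_gt_0; intro; lra. }
        lra. }
      assert (E : PRv - (2/D - 1/D^2 - a/D^2*e1) = (D - X)^2 / (X * D^2)).
      { unfold PRv, X. field. split; intro; nra. }
      assert (0 <= (D - X)^2 / (X * D^2)).
      { apply div_nonneg; [apply pow2_ge_0|].
        apply Rmult_lt_0_compat; [lra|]. apply pow2_gt_0; intro; lra. }
      lra. }
    set (B1 := PRv * etaL + (1 - PRv) * etaN).
    set (B2 := PRb * etaL + (1 - PRb) * etaN).
    assert (HB1 : 0 < B1) by (unfold B1; nra).
    assert (HB12 : B1 <= B2).
    { unfold B1, B2. assert (0 <= (PRv - PRb) * (etaN - etaL)) by (apply Rmult_le_pos; lra). nra. }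
    assert (Hd2 : 0 < d^2) by (apply pow2_gt_0; intro; lra).
    assert (HLh : 0 < d^2 * L * B1) by (repeat apply Rmult_lt_0_compat; lra).
    assert (HLL : d^2 * L * B1 <= d^2 * L * B2).
    { apply Rmult_le_compat_l; [|lra]. left; apply Rmult_lt_0_compat; lra. }
    pose proof (tang_inv (d^2 * L * B2) L0 ltac:(lra)) as T.
    apply Rle_trans with (G * (1 / (d^2*L*B2))).
    { apply Rmult_le_compat_l; lra. }
    unfold Rdiv. rewrite Rmult_1_l. apply Rmult_le_compat_l; [lra|].
    apply Rinv_le_contravar; lra.
  - intros x1 y1 x2 y2 t Ht.
    unfold Hsur. cbv zeta.
    pose proof (Lambda_eq a b etaL etaN L p q h0 z x0 y0) as LE.
    cbv zeta in LE.
    set (D := Dst a b p q h0 z x0 y0) in *.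
    set (C := Cst p q h0 z x0 y0) in *.
    set (k := 1 / (C * sqrt (C^2 - 1))) in *.
    set (K := etaN - (2/D - 1/D^2)*(etaN-etaL)) in *.
    set (M := a/D^2*(etaN-etaL)) in *.
    set (al := - b * (180 / PI * (asin (1/C) + k * C) - a)) in *.
    set (be := b * (180/PI) * k / (z - h0)) in *.
    assert (HK : 0 <= K).
    { unfold K. assert (E : 2/D - 1/D^2 = 1 - (1 - 1/D)^2) by (field; lra).
      rewrite E. assert (0 <= (1 - 1/D)^2 * (etaN - etaL)) by (apply Rmult_le_pos; [apply pow2_ge_0|lra]).
      nra. }
    assert (HM : 0 <= M).
    { unfold M. apply Rmult_le_pos; [|lra]. apply div_nonneg; [lra|]. apply pow2_gt_0; intro; lra. }
    pose proof (Cst_gt1 p q h0 z x0 y0 Hz Hn) as HC. fold C in HC.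
    assert (Hk : 0 <= k).
    { unfold k. apply div_nonneg; [lra|]. apply Rmult_lt_0_compat; [lra|].
      apply sqrt_lt_R0. nra. }
    assert (Hbe : 0 <= be).
    { unfold be. pose proof PI_RGT_0. apply div_nonneg; [|lra].
      apply Rmult_le_pos; [|lra]. left; apply Rmult_lt_0_compat; [lra|]. apply Rdiv_lt_0_compat; lra. }
    rewrite !LE by assumption.
    set (L0 := L * phi K M al be (dist3 p q h0 z x0 y0)).
    set (dm := dist3 p q h0 z (t * x1 + (1 - t) * x2) (t * y1 + (1 - t) * y2)).
    set (d1 := dist3 p q h0 z x1 y1). set (d2 := dist3 p q h0 z x2 y2).
    assert (Hdm : 0 <= dm <= t * d1 + (1-t) * d2).
    { split. apply sqrt_pos. unfold dm, d1, d2, dist3.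
      replace (t * x1 + (1 - t) * x2 - p) with (t * (x1 - p) + (1-t) * (x2 - p)) by ring.
      replace (t * y1 + (1 - t) * y2 - q) with (t * (y1 - q) + (1-t) * (y2 - q)) by ring.
      replace ((z - h0)^2) with ((t * (z - h0) + (1-t) * (z - h0))^2) at 1 by ring.
      apply norm_convex; exact Ht. }
    pose proof (phi_convex K M al be dm d1 d2 t HK HM Hbe (sqrt_pos _) (sqrt_pos _) Ht Hdm) as PC.
    set (iL := / L0^2).
    assert (HiL : 0 <= iL).
    { unfold iL. destruct (Req_dec L0 0) as [E|E].
      rewrite E. replace (0^2) with 0 by ring. rewrite Rinv_0; lra.
      left; apply Rinv_0_lt_compat, pow2_gt_0; exact E. }
    set (p1 := phi K M al be d1) in *. set (p2 := phi K M al be d2) in *.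
    set (pm := phi K M al be dm) in *.
    assert (0 <= G * iL * L * (t * p1 + (1-t) * p2 - pm)).
    { apply Rmult_le_pos; [|lra]. apply Rmult_le_pos; [|lra]. apply Rmult_le_pos; lra. }
    assert (E : G*(2/L0 - L*pm/L0^2) - (t*(G*(2/L0 - L*p1/L0^2)) + (1-t)*(G*(2/L0 - L*p2/L0^2)))
                = G*iL*L*(t*p1+(1-t)*p2-pm)) by (unfold iL, Rdiv; ring).
    lra.
Qed.
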